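(* The compact Riemannian nilmanifold $M=(\Gamma\backslash N,g)$ defined below has completely integrable geodesic flow.
   Context: Let $\mathfrak v$ be a 5-dimensional real inner product space with orthonormal basis $X_i,X_j,Y_i,Y_j,Y_k$ and $\mathfrak z$ a 3-dimensional real inner product space with orthonormal basis $Z_i,Z_j,Z_k$. On $\mathfrak n=\mathfrak v\oplus\mathfrak z$ (orthogonal sum) define a two-step nilpotent Lie bracket $[\,,]$ with $\mathfrak z$ central and $[\mathfrak v,\mathfrak v]\subseteq\mathfrak z$, whose only nonzero brackets of basis vectors (up to antisymmetry) are $[X_i,Y_j]=Z_k$, $[X_i,Y_k]=-Z_j$, $[X_j,Y_i]=-Z_k$, $[X_j,Y_k]=Z_i$. Let $N$ be the simply connected Lie group with Lie algebra $\mathfrak n$, $g$ the left invariant metric given by the inner product on $\mathfrak n$, and $\Gamma=\exp(\mathcal G)$ with $\mathcal G=\mathrm{span}_{\mathbb Z}\{X_i,X_j,Y_i,Y_j,Y_k,\tfrac12 Z_i,\tfrac12 Z_j,\tfrac12 Z_k\}$ (a discrete cocompact subgroup); $M=(\Gamma\backslash N,g)$ carries the induced metric. Completely integrable geodesic flow (Liouville) on an $n$-manifold means: there exist $n$ pairwise Poisson-commuting smooth first integrals of the geodesic flow on $T^*M$ with $df_1\wedge\dots\wedge df_n\neq0$ on an open dense set. *)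

(* Defs.v *)
From HB Require Import structures.
From mathcomp Require Import all_boot all_order all_algebra.
From mathcomp Require Import all_classical all_reals all_analysis.
Set Implicit Arguments. Unset Strict Implicit. Unset Printing Implicit Defensive.
Import Order.TTheory GRing.Theory Num.Theory.
Import numFieldNormedType.Exports.
Local Open Scope classical_set_scope.
Local Open Scope ring_scope.

Section Calc.
Variable R : realType.

Definition evec (n : nat) (i : 'I_n) : 'rV[R]_n := \row_(j < n) (i == j)%:R.

Definition pdiff (n : nat) (i : 'I_n) (f : 'rV[R]_n -> R) : 'rV[R]_n -> R :=
  fun x => 'D_(evec i) f x.

Definition iter_pdiff (n : nat) (s : seq 'I_n) (f : 'rV[R]_n -> R) :=
  foldr (@pdiff n) f s.

Definition smooth (n : nat) (f : 'rV[R]_n -> R) : Prop :=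
  forall s : seq 'I_n,
    continuous (iter_pdiff s f) /\
    forall (x : 'rV[R]_n) (i : 'I_n), derivable (iter_pdiff s f) x (evec i).

(* Coordinates on T^*N = N x n^*  ~=  R^8 x R^8 = R^16.                     *)
(* N is identified with n = v (+) z via exp (exponential coordinates);      *)
(* a point of T^*N is (x, z, xi, eta) with                                  *)
(*   x  = coords 0..4   (w.r.t. X_i, X_j, Y_i, Y_j, Y_k),                   *)
(*   z  = coords 5..7   (w.r.t. Z_i, Z_j, Z_k),                             *)
(*   xi = coords 8..12, eta = coords 13..15  (the canonical momenta         *)
(*   conjugate to x and z).                                                 *)
Definition cT := 'rV[R]_16.

Definition cc (X : cT) (k : nat) : R := X ord0 (inord k).
Definition xv  (X : cT) (k : nat) : R := cc X k.
Definition zv  (X : cT) (l : nat) : R := cc X (5 + l).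
Definition xiv (X : cT) (k : nat) : R := cc X (8 + k).
Definition etv (X : cT) (l : nat) : R := cc X (13 + l).

(* The bracket [ , ] : v x v -> z in coordinates (component l = Z_i, Z_j,
   Z_k for l = 0,1,2).  Basis of v indexed 0:X_i 1:X_j 2:Y_i 3:Y_j 4:Y_k.
   [X_i,Y_j]=Z_k, [X_i,Y_k]=-Z_j, [X_j,Y_i]=-Z_k, [X_j,Y_k]=Z_i. *)
Definition brk (u w : nat -> R) (l : nat) : R :=
  match l with
  | 0%N => u 1%N * w 4%N - u 4%N * w 1%N
  | 1%N => - (u 0%N * w 4%N - u 4%N * w 0%N)
  | _ => (u 0%N * w 3%N - u 3%N * w 0%N) - (u 1%N * w 2%N - u 2%N * w 1%N)
  end.

Definition ebas (k : nat) : nat -> R := fun m => (m == k)%:R.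

(* Hamiltonian of the geodesic flow of the left-invariant metric g:
   H(q,p) = 1/2 |p o (dL_q)_e|^2 ; for q = exp(x+z), (dL_q)_e (a,c) =
   (a, c + 1/2 [x,a]). *)
Definition Ham (X : cT) : R :=
  2^-1 * (\sum_(k < 5)
             (xiv X k + 2^-1 * \sum_(l < 3) etv X l * brk (xv X) (ebas k) l) ^+ 2
          + \sum_(l < 3) etv X l ^+ 2).

(* Cotangent lift of left translation by gamma = exp(a + c/2) in Gamma,
   a in Z^5 (coeffs of X_i,...,Y_k), c in Z^3 (so the Z-part is c/2):
   q = (x,z) |-> (a + x, c/2 + z + 1/2 [a,x]),
   p = (xi,eta) |-> (xi - 1/2 <eta, [a, .]>, eta). *)
Definition gact (a c : nat -> int) (X : cT) : cT :=
  \row_(j < 16)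
    (if (j < 5)%N then xv X j + (a j)%:~R
     else if (j < 8)%N then
       zv X (j - 5) + 2^-1 * (c (j - 5)%N)%:~R
       + 2^-1 * brk (fun m => (a m)%:~R) (xv X) (j - 5)
     else if (j < 13)%N then
       xiv X (j - 8)
       - 2^-1 * \sum_(l < 3) etv X l * brk (fun m => (a m)%:~R) (ebas (j - 8)) l
     else etv X (j - 13)).

(* Functions on T^*M = T^*(Gamma\N) are the Gamma-invariant functions on
   T^*N. *)
Definition gamma_invariant (f : cT -> R) : Prop :=
  forall (a c : nat -> int) (X : cT), f (gact a c X) = f X.

Definition qi (i : 'I_8) : 'I_16 := inord i.
Definition pi_ (i : 'I_8) : 'I_16 := inord (8 + i).

Definition poisson (f g : cT -> R) (X : cT) : R :=
  \sum_(i < 8) (pdiff (qi i) f X * pdiff (pi_ i) g X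
                - pdiff (pi_ i) f X * pdiff (qi i) g X).

Definition jacobian (f : 'I_8 -> cT -> R) (X : cT) : 'M[R]_(8, 16) :=
  \matrix_(k < 8, j < 16) pdiff j (f k) X.

Definition completely_integrable_geodesic_flow : Prop :=
  exists f : 'I_8 -> cT -> R,
    (forall k, smooth (f k)) /\
    (forall k, gamma_invariant (f k)) /\
    (forall k X, poisson (f k) Ham X = 0) /\
    (forall k l X, poisson (f k) (f l) X = 0) /\
    exists U : set cT, open U /\ dense U /\
      forall X, U X -> row_free (jacobian f X).

End Calc.

(* Main.v *)
Require Import Defs.
From HB Require Import structures.
From mathcomp Require Import all_boot all_order all_algebra.
From mathcomp Require Import all_classical all_reals all_analysis.
From mathcomp Require Import ring lra.
Set Implicit Arguments. Unset Strict Implicit. Unset Printing Implicit Defensive.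
Import Order.TTheory GRing.Theory Num.Theory.
Import numFieldNormedType.Exports.
Local Open Scope classical_set_scope.
Local Open Scope ring_scope.

Section Main.
Variable R : realType.

Lemma is_derive_line (f : cT R -> R) (x v : cT R) (df : R) :
  is_derive (0:R) 1 (fun h : R => f (h *: v + x)) df -> is_derive x v f df.
Proof.
case=> d1 d2; split; first by apply/derivable1P.
rewrite -d2 /derive.
set g1 := (fun h => _); set g2 := (fun h => _).
suff -> : g1 = g2 by [].
rewrite funeqE => h; rewrite /g1 /g2 /=.
by rewrite scale0r add0r addr0 [_%:A]mulr1.
Qed.

Definition Ef (t : R) : R := if t == 0 then 0 else expR (- (t ^+ 2)^-1).

Lemma Ef0 : Ef 0 = 0.
Proof. by rewrite /Ef eqxx. Qed.

Lemma Ef_bound n t : `|(t^-1) ^+ n * Ef t| <= ((n.+1)`!%:R + 1) * t ^+ 2.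
Proof.
rewrite /Ef; have [->|t0] := eqVneq t 0.
  by rewrite mulr0 normr0 expr0n /= mulr0.
set y := (t ^+ 2)^-1.
have t20 : 0 < t ^+ 2 by rewrite exprn_even_gt0.
have y0 : 0 < y by rewrite invr_gt0.
have yt : y * t ^+ 2 = 1 by rewrite mulVf // gt_eqF.
set E := expR (- y).
have E0 : 0 < E := expR_gt0 _.
have hE : E * expR y = 1 by rewrite /E expRN mulVf // gt_eqF // expR_gt0.
have h1 : y <= expR y by have := expR_ge1Dx y; lra.
set K := (n.+1)`!%:R : R.
have K0 : 0 < K by rewrite ltr0n fact_gt0.
have h2 : y ^+ n.+1 <= K * expR y.
  have := expR_ge1Dxn n (ltW y0); rewrite -/K => h.
  have : y ^+ n.+1 / K <= expR y.
    have : 0 <= 1 :> R by []. lra.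
  by rewrite ler_pdivrMr // mulrC.
set b := `|(t^-1) ^+ n|.
have b0 : 0 <= b by exact: normr_ge0.
have bb : b ^+ 2 = y ^+ n.
  by rewrite /b real_normK ?num_real // -exprM mulnC exprM exprVn.
rewrite normrM (ger0_norm (ltW E0)) -/b.
have hb : b <= b ^+ 2 + 1 by nra.
have h3 : y ^+ n * y * E <= K.
  rewrite -(ler_pM2r E0) -mulrA [expR y * E]mulrC hE mulr1 exprSr in h2.
  exact: h2.
have h4 : y * E <= 1.
  by rewrite -(ler_pM2r E0) [expR y * E]mulrC hE in h1.
rewrite bb in hb.
set P := y ^+ n in hb h3 *.
have P0 : 0 <= P by rewrite /P exprn_ge0 // ltW.
have e1 : b * E <= (P + 1) * E by rewrite ler_pM2r.
have e2 : (P + 1) * E = t ^+ 2 * (P * y * E + y * E).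
  by rewrite -[LHS]mul1r -{1}yt; ring.
have e3 : t ^+ 2 * (P * y * E + y * E) <= t ^+ 2 * (K + 1).
  by rewrite ler_pM2l //; lra.
lra.
Qed.


Lemma near_neq0 (s : R) : s != 0 -> \forall t \near s, t != 0.
Proof. move=> s0; exact: (@cvgr_neq0 _ _ _ _ _ id s cvg_id s0). Qed.

Lemma is_derive_pow (s : R) n : is_derive s 1 (fun t : R => t ^+ n) (n%:R * s ^+ n.-1).
Proof.
apply: DeriveDef; first exact: exprn_derivable.
by rewrite exp_derive [_%:A]mulr1.
Qed.

Lemma is_derive_Ef (s : R) : s != 0 -> is_derive s (1:R) Ef (2 * (s^-1) ^+ 3 * Ef s).
Proof.
move=> s0.
have s20 : s ^+ 2 != 0 by rewrite expf_neq0.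
have d2 := @is_deriveV R (fun t => t ^+ 2) s _ 1 s20 (is_derive_pow s 2).
have d3 := is_deriveN d2.
have d4 := is_derive1_comp (is_derive_expR _) d3.
apply: (is_derive_eq (near_eq_is_derive _ d4)).
  near=> t; rewrite /Ef /= ifF //; apply/negbTE; near: t; exact: near_neq0.
rewrite /Ef ifF; last exact/negbTE.
rewrite /= exprVn.
rewrite -[X in X = _]/(expR (- (s ^+ 2)^-1) * (- (- ((s ^+ 2) ^+ 2)^-1 * (2 * s ^+ 1)))).
by field.
Unshelve. all: by end_near. Qed.

Lemma is_derive0_bound (phi : R -> R) (K : R) : phi 0 = 0 ->
  (forall h, `|phi h| <= K * h ^+ 2) -> is_derive (0:R) (1:R) phi 0.
Proof.
move=> p0 pb.
have cv : (fun h : R => h^-1 *: ((phi \o shift 0) (h *: 1) - phi 0)) @ 0^' --> (0:R).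
  apply/cvgr0Pnorm_lt => e e0.
  have eK : 0 < e / (`|K| + 1) by rewrite divr_gt0 // ltr_wpDl.
  near=> h.
  have h0 : h != 0 by near: h; exact: nbhs_dnbhs_neq.
  have hs : `|h| < e / (`|K| + 1) by near: h; exact: dnbhs0_lt.
  rewrite /= p0 subr0 addr0 [h *: 1]mulr1 normrM normfV.
  have a0 : 0 < `|h| by rewrite normr_gt0.
  have := pb h; rewrite -(real_normK (num_real h)) => hb.
  rewrite ltr_pdivlMr ?ltr_wpDl // in hs.
  rewrite -(ltr_pM2l a0) mulrA mulfV ?gt_eqF // mul1r.
  have Kn : K <= `|K| := ler_norm K.
  have h1 : K * `|h| ^+ 2 <= `|K| * `|h| ^+ 2 by rewrite ler_pM2r // exprn_gt0.
  have h2 : `|h| * (`|h| * (`|K| + 1)) < `|h| * e by rewrite ltr_pM2l.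
  have h3 : 0 < `|h| ^+ 2 by rewrite exprn_gt0.
  rewrite expr2 in h1 h3; nra.
split; first exact: cvgP cv.
by rewrite /derive (cvg_lim _ cv).
Unshelve. all: by end_near. Qed.

Lemma is_derive_cont (g : R -> R) (s d : R) : is_derive s (1:R) g d -> {for s, continuous g}.
Proof. by case=> /derivable1_diffP /differentiable_continuous. Qed.

Lemma scaleRE (a b : R) : a *: b = a * b. Proof. by []. Qed.

Inductive expr : Type :=
| Zr | Cst of R | Var of nat | Add of expr & expr | Mul of expr & expr
| Atom of nat & bool & expr.

Definition trig (b : bool) (u : R) : R := if b then sin u else cos u.
Definition atomf (n : nat) (b : bool) (u t : R) : R :=
  (t^-1) ^+ n * Ef t * trig b (u * t^-1).
Arguments atomf : simpl never.

Fixpoint den (e : expr) (X : cT R) : R :=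
  match e with
  | Zr => 0
  | Cst c => c
  | Var k => cc X k
  | Add a b => den a X + den b X
  | Mul a b => den a X * den b X
  | Atom n b J => atomf n b (den J X) (cc X 15)
  end.

Fixpoint D (dv : nat -> R) (e : expr) : expr :=
  match e with
  | Zr => Zr
  | Cst _ => Cst 0
  | Var k => Cst (dv k)
  | Add a b => Add (D dv a) (D dv b)
  | Mul a b => Add (Mul (D dv a) b) (Mul a (D dv b))
  | Atom n b J =>
      Add (Mul (Cst (- n%:R * dv 15)) (Atom n.+1 b J))
        (Add (Mul (Cst (2 * dv 15)) (Atom n.+3 b J))
          (Mul (Cst (if b then 1 else -1))
            (Add (Mul (D dv J) (Atom n.+1 (~~ b) J))
                 (Mul (Cst (- dv 15)) (Mul J (Atom n.+2 (~~ b) J))))))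
  end.

Lemma atomf_t0 n b u : atomf n b u 0 = 0.
Proof. by rewrite /atomf Ef0 mulr0 mul0r. Qed.

Lemma cc_line (X v : cT R) (h : R) k : cc (h *: v + X) k = h * cc v k + cc X k.
Proof. by rewrite /cc !mxE. Qed.

Lemma lin_derive (a b : R) : is_derive (0:R) (1:R) (fun h : R => h * a + b) a.
Proof.
have := is_deriveD (is_deriveM (@is_derive_id _ _ (0:R) (1:R)) (is_derive_cst a (0:R) (1:R)))
   (is_derive_cst b (0:R) (1:R)).
move/is_derive_eq; apply.
by rewrite /= !scaleRE mul0r add0r mulr1 addr0.
Qed.

Lemma trig_derive b (x : R) : is_derive x (1:R) (trig b) (if b then cos x else - sin x).
Proof. by case: b; [exact: is_derive_sin | exact: is_derive_cos]. Qed.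

Lemma trig_le1 b x : `|trig b x| <= 1.
Proof.
rewrite /trig; case: b.
  by rewrite ler_norml sin_le1 sin_geN1.
by rewrite ler_norml cos_le1 cos_geN1.
Qed.

Lemma natpowS (n : nat) (u : R) : n%:R * u ^+ n.-1 * u ^+ 2 = n%:R * u ^+ n.+1.
Proof. by case: n => [|n]; rewrite ?mul0r // -mulrA -exprD addn2. Qed.

Lemma is_deriveM' (f g : R -> R) (x df dg : R) : is_derive x (1:R) f df ->
  is_derive x (1:R) g dg -> is_derive x (1:R) (fun h => f h * g h) (f x * dg + g x * df).
Proof. by move=> a b; have := is_deriveM a b. Qed.

Lemma is_derive_comp' (f g : R -> R) (x a b : R) : is_derive (g x) (1:R) f a ->
  is_derive x (1:R) g b -> is_derive x (1:R) (fun h => f (g h)) (a * b).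
Proof. by move=> a' b'; have := is_derive1_comp a' b'. Qed.

Lemma den_line e (X v : cT R) :
  is_derive (0:R) (1:R) (fun h => den e (h *: v + X)) (den (D (cc v) e) X).
Proof.
elim: e => [|c|k|a IHa b IHb|a IHa b IHb|n b J IH] /=.
- exact: is_derive_cst.
- exact: is_derive_cst.
- rewrite (_ : (fun h => _) = (fun h : R => h * cc v k + cc X k)); last first.
    by apply: funext => h; rewrite cc_line mulrC.
  exact: lin_derive.
- exact: is_deriveD.
- have := is_deriveM IHa IHb; move/is_derive_eq; apply.
  by rewrite /= scale0r add0r !scaleRE addrC mulrC.
- set U := fun h => den J (h *: v + X).
  set d := cc v 15; set t0 := cc X 15.
  rewrite (_ : (fun h => _) = (fun h => atomf n b (U h) (h * d + t0))); last first.
    by apply: funext => h; rewrite cc_line.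
  have U0 : U 0 = den J X by rewrite /U scale0r add0r.
  have [t00|t0n] := eqVneq t0 0.
    have hz : forall w, atomf n.+1 b w t0 = 0 /\ atomf n.+3 b w t0 = 0 /\
       atomf n.+1 (~~ b) w t0 = 0 /\ atomf n.+2 (~~ b) w t0 = 0.
      by move=> w; rewrite t00 !atomf_t0.
    have [h1 [h2 [h3 h4]]] := hz (den J X).
    rewrite h1 h2 h3 h4 !(mulr0, addr0).
    have [d0|dn] := eqVneq d 0.
      rewrite (_ : (fun h => _) = cst 0); first exact: is_derive_cst.
      by apply: funext => h; rewrite d0 t00 mulr0 addr0 atomf_t0.
    apply: (@is_derive0_bound _ (((n.+1)`!%:R + 1) * d ^+ 2)).
      by rewrite mul0r add0r t00 atomf_t0.
    move=> h; rewrite t00 addr0 /atomf normrM.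
    have := Ef_bound n (h * d); have := trig_le1 b (U h * (h * d)^-1).
    move=> ht hb.
    have hA : 0 <= `|((h * d)^-1) ^+ n * Ef (h * d)| by [].
    rewrite exprMn mulrA [_ * h ^+ 2]mulrC mulrA in hb.
    rewrite -[_ * h ^+ 2]mulrC mulrA.
    have := ler_pM hA (normr_ge0 _) hb ht; rewrite mulr1 => hh.
    apply: (le_trans hh); rewrite le_eqVlt; apply/orP; left; apply/eqP; ring.
  have T0 : 0 * d + t0 != 0 by rewrite mul0r add0r.
  have dT := lin_derive d t0.
  have dTi := @is_deriveV R (fun h => h * d + t0) 0 _ 1 T0 dT.
  have dA := @is_derive_comp' (fun t => t ^+ n) (fun h => (h * d + t0)^-1) 0 _ _ (is_derive_pow _ n) dTi.
  have dE := @is_derive_comp' Ef (fun h => h * d + t0) 0 _ _ (is_derive_Ef T0) dT.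
  have dW := is_deriveM' IH dTi.
  have dS := @is_derive_comp' (trig b) _ 0 _ _ (trig_derive b _) dW.
  have dP := is_deriveM' (is_deriveM' dA dE) dS.
  move: dP; move/is_derive_eq; apply.
  rewrite /= !scaleRE mul0r add0r -/(U 0) U0.
  rewrite /atomf -!exprVn; set u := t0^-1.
  have -> : n%:R * u ^+ n.-1 * (- u ^+ 2 * d) = - (n%:R * u ^+ n.+1 * d).
    by rewrite -natpowS; ring.
  rewrite !exprS.
  by clear dS; case: b => /=; ring.
Qed.


Lemma ccont k : continuous (fun X : cT R => cc X k).
Proof. by move=> x; rewrite /cc; exact: coord_continuous. Qed.

Lemma ccontx k (x : cT R) : {for x, continuous (fun X : cT R => cc X k)}.
Proof. exact: ccont. Qed.

Lemma cont_comp1 {T : topologicalType} (f : T -> R) (g : R -> R) x :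
  {for x, continuous f} -> {for (f x), continuous g} -> {for x, continuous (fun X => g (f X))}.
Proof. by move=> a b; have := continuous_comp a b. Qed.

Lemma den_cont e : continuous (den e).
Proof.
elim: e => [|c|k|a IHa b IHb|a IHa b IHb|n b J IH] x /=.
- exact: cst_continuous.
- exact: cst_continuous.
- exact: ccont.
- by have := continuousD (IHa x) (IHb x).
- by have := continuousM (IHa x) (IHb x).
- set K := ((n.+1)`!%:R + 1 : R).
  have ct : {for x, continuous (fun X => K * (cc X 15 * cc X 15))}.
    have := continuousM (@cst_continuous _ _ K x) (continuousM (@ccontx 15 x) (@ccontx 15 x)).
    by [].
  have [t00|t0n] := eqVneq (cc x 15) 0.
    rewrite /continuous_at t00 atomf_t0.
    apply: (@squeeze_cvgr _ (nbhs x) _ _ (fun X => - (K * (cc X 15 * cc X 15)))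
                                  (fun X => K * (cc X 15 * cc X 15))).
    - near=> X; rewrite -ler_norml /atomf normrM.
      have := Ef_bound n (cc X 15); have := trig_le1 b (den J X * (cc X 15)^-1).
      move=> ht hb.
      have hA : 0 <= `|(cc X 15)^-1 ^+ n * Ef (cc X 15)| by [].
      have := ler_pM hA (normr_ge0 _) hb ht; rewrite mulr1 expr2 //.
    - have e : - (K * (cc x 15 * cc x 15)) = 0 by rewrite t00 !mulr0 oppr0.
      by rewrite -e; exact: (continuousN ct).
    - have e : K * (cc x 15 * cc x 15) = 0 by rewrite t00 !mulr0.
      by rewrite -e; exact: ct.
  have hM : forall (f g h : cT R -> R), {for x, continuous f} -> {for x, continuous g} ->
     {for x, continuous h} -> {for x, continuous (fun X => f X * g X * h X)}.
    by move=> f g h cf cg ch; have := continuousM (continuousM cf cg) ch.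
  apply: hM.
  - apply: (@cont_comp1 _ (fun X => cc X 15) (fun t => (t^-1)^+n) x (@ccontx 15 x)).
    apply: (@cont_comp1 R GRing.inv (fun t => t ^+ n) (cc x 15)); first exact: inv_continuous.
    exact: is_derive_cont (is_derive_pow _ n).
  - apply: (@cont_comp1 _ (fun X => cc X 15) Ef x (@ccontx 15 x)).
    exact: is_derive_cont (is_derive_Ef t0n).
  - apply: (@cont_comp1 _ (fun X => den J X * (cc X 15)^-1) (trig b) x); last exact: is_derive_cont (trig_derive b _).
    have := continuousM (IH x) (cont_comp1 (@ccontx 15 x) (inv_continuous t0n)).
    by [].
Unshelve. all: by end_near. Qed.

Lemma pdiff_den (i : 'I_16) e : pdiff i (den e) = den (D (cc (@evec R 16 i)) e).
Proof.
apply: funext => X; rewrite /pdiff.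
by have [_ ->] := is_derive_line (den_line e X (@evec R 16 i)).
Qed.

Lemma iter_den s e : exists e', iter_pdiff s (den e) = den e'.
Proof.
elim: s => [|i s [e' IH]] /=; first by exists e.
by exists (D (cc (@evec R 16 i)) e'); rewrite IH pdiff_den.
Qed.

Lemma smooth_den e : smooth (den e).
Proof.
move=> s; have [e' ->] := iter_den s e; split; first exact: den_cont.
by move=> X i; have [] := is_derive_line (den_line e' X (@evec R 16 i)).
Qed.

Fixpoint vok (e : expr) : bool :=
  match e with
  | Zr => true
  | Cst _ => true
  | Var k => (k < 16)%N
  | Add a b => vok a && vok b
  | Mul a b => vok a && vok b
  | Atom _ _ J => vok J
  end.

Lemma D_ext (dv dv' : nat -> R) e X : vok e -> (forall k, (k < 16)%N -> dv k = dv' k) ->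
  den (D dv e) X = den (D dv' e) X.
Proof.
move=> + hd; elim: e => [|c|k|a IHa b IHb|a IHa b IHb|n b J IH] //=.
- by move=> hk; rewrite hd.
- by case/andP=> ha hb; rewrite IHa ?IHb.
- by case/andP=> ha hb; rewrite IHa ?IHb.
- by move=> hJ; rewrite !hd // IH.
Qed.

Definition dvn (m : nat) (k : nat) : R := if m == k then 1 else 0.

Lemma cc_evec (m : nat) k : (m < 16)%N -> (k < 16)%N -> cc (@evec R 16 (inord m)) k = dvn m k.
Proof.
move=> hm hk; rewrite /cc /evec mxE /dvn.
have -> : (inord m == inord k :> 'I_16) = (m == k).
  by apply/eqP/eqP => [h|->//]; move: (congr1 (@nat_of_ord 16) h); rewrite !inordK.
by case: (m == k).
Qed.

Lemma pdiff_dvn (m : nat) e X : (m < 16)%N -> vok e ->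
  pdiff (inord m) (den e) X = den (D (dvn m) e) X.
Proof.
move=> hm he; rewrite pdiff_den; apply: D_ext => // k hk.
exact: cc_evec.
Qed.

Lemma poisson_den e1 e2 X : vok e1 -> vok e2 ->
  poisson (den e1) (den e2) X =
  \sum_(i < 8) (den (D (dvn i) e1) X * den (D (dvn (8 + i)) e2) X
               - den (D (dvn (8 + i)) e1) X * den (D (dvn i) e2) X).
Proof.
move=> h1 h2; rewrite /poisson; apply: eq_bigr => i _.
have hi : (i < 16)%N by apply: (@ltn_trans 8); rewrite ?ltn_ord.
have hi' : (8 + i < 16)%N by rewrite -[16%N]/(8 + 8)%N ltn_add2l ltn_ord.
by rewrite /qi /pi_ !pdiff_dvn.
Qed.

Definition mkAdd (a b : expr) : expr :=
  match a, b with
  | Zr, _ => b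
  | _, Zr => a
  | _, _ => Add a b
  end.
Definition mkMul (a b : expr) : expr :=
  match a, b with
  | Zr, _ => Zr
  | _, Zr => Zr
  | _, _ => Mul a b
  end.
Arguments mkAdd : simpl nomatch.
Arguments mkMul : simpl nomatch.
Lemma mkAddE a b X : den (mkAdd a b) X = den a X + den b X.
Proof. by case: a; case: b => * /=; rewrite ?add0r ?addr0. Qed.
Lemma mkMulE a b X : den (mkMul a b) X = den a X * den b X.
Proof. by case: a; case: b => * /=; rewrite ?mul0r ?mulr0. Qed.

Fixpoint Dn (m : nat) (e : expr) : expr :=
  match e with
  | Zr => Zr
  | Cst _ => Zr
  | Var k => if m == k then Cst 1 else Zr
  | Add a b => mkAdd (Dn m a) (Dn m b)
  | Mul a b => mkAdd (mkMul (Dn m a) b) (mkMul a (Dn m b))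
  | Atom n b J =>
      if m == 15 then
      Add (Mul (Cst (- n%:R)) (Atom n.+1 b J))
        (Add (Mul (Cst 2) (Atom n.+3 b J))
          (Mul (Cst (if b then 1 else -1))
            (Add (mkMul (Dn m J) (Atom n.+1 (~~ b) J))
                 (Mul (Cst (-1)) (Mul J (Atom n.+2 (~~ b) J))))))
      else mkMul (Cst (if b then 1 else -1)) (mkMul (Dn m J) (Atom n.+1 (~~ b) J))
  end.

Lemma Dn_D m e X : den (Dn m e) X = den (D (dvn m) e) X.
Proof.
elim: e => [|c|k|a IHa b IHb|a IHa b IHb|n b J IH] /=.
- by [].
- by [].
- by rewrite /dvn; case: (m == k).
- by rewrite mkAddE IHa IHb.
- by rewrite mkAddE !mkMulE IHa IHb.
- rewrite /dvn; case: (m == 15) => /=; rewrite ?mkMulE IH /=; ring.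
Qed.

Lemma poisson_Dn e1 e2 X : vok e1 -> vok e2 ->
  poisson (den e1) (den e2) X =
  \sum_(i < 8) (den (Dn i e1) X * den (Dn (8 + i) e2) X
               - den (Dn (8 + i) e1) X * den (Dn i e2) X).
Proof.
by move=> h1 h2; rewrite poisson_den //; apply: eq_bigr => i _; rewrite !Dn_D.
Qed.

End Main.

Section S. Variable R : realType.

Definition Sub (a b : expr R) := Add a (Mul (Cst (-1)) b).
Definition hf := @Cst R (2^-1).
Definition P0 := Add (Var R 8) (Mul hf (Sub (Mul (Var R 14) (Var R 4)) (Mul (Var R 15) (Var R 3)))).
Definition P1 := Add (Var R 9) (Mul hf (Sub (Mul (Var R 15) (Var R 2)) (Mul (Var R 13) (Var R 4)))).
Definition P2 := Sub (Var R 10) (Mul hf (Mul (Var R 15) (Var R 1))).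
Definition P3 := Add (Var R 11) (Mul hf (Mul (Var R 15) (Var R 0))).
Definition P4 := Add (Var R 12) (Mul hf (Sub (Mul (Var R 13) (Var R 1)) (Mul (Var R 14) (Var R 0)))).
Definition Sq (a : expr R) := Mul a a.
Definition HamE := Mul hf (Add (Add (Add (Add (Add (Add (Add (Sq P0) (Sq P1)) (Sq P2)) (Sq P3)) (Sq P4))
   (Sq (Var R 13))) (Sq (Var R 14))) (Sq (Var R 15))).
Definition jP0 := Sub (Mul (Var R 15) P3) (Mul (Var R 14) P4).
Definition jP1 := Sub (Mul (Var R 13) P4) (Mul (Var R 15) P2).
Definition jP2 := Mul (Var R 15) P1.
Definition jP3 := Mul (Cst (-1)) (Mul (Var R 15) P0).
Definition jP4 := Sub (Mul (Var R 14) P0) (Mul (Var R 13) P1).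
Definition QE := Add (Add (Add (Add (Sq jP0) (Sq jP1)) (Sq jP2)) (Sq jP3)) (Sq jP4).
Definition CE := Add (Add (Mul (Var R 13) (Var R 10)) (Mul (Var R 14) (Var R 11))) (Mul (Var R 15) (Var R 12)).
Definition J1E := Mul (Cst (2 * pi)) (Sub (Var R 11) (Mul hf (Mul (Var R 15) (Var R 0)))).
Definition J0E := Mul (Cst (2 * pi)) (Add (Var R 10) (Mul hf (Mul (Var R 15) (Var R 1)))).
Definition FE := Atom 0 true J1E.
Definition GE := Atom 0 true J0E.


Lemma gact_cc a c (X : cT R) k : (k < 16)%N -> cc (gact a c X) k =
  (if (k < 5)%N then xv X k + (a k)%:~R
   else if (k < 8)%N then
       zv X (k - 5)%N + 2^-1 * (c (k - 5)%N)%:~R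
       + 2^-1 * brk (fun m => (a m)%:~R) (xv X) (k - 5)%N
   else if (k < 13)%N then
       xiv X (k - 8)%N
       - 2^-1 * \sum_(l < 3) etv X l * brk (fun m => (a m)%:~R) (ebas R (k - 8)%N) l
   else etv X (k - 13)%N).
Proof. by move=> hk; rewrite /gact /cc mxE inordK. Qed.

Lemma trig_per b (w : R) (n : nat) : trig b (w + (pi *+ 2) *+ n) = trig b w.
Proof. by rewrite /trig; case: b; apply: periodicn; [exact: sinD2pi | exact: cosD2pi]. Qed.

Lemma atomf_per n b (u t : R) (k : int) :
  atomf n b (u + t * (2 * pi) * k%:~R) t = atomf n b u t.
Proof.
have [->|t0] := eqVneq t 0; first by rewrite !atomf_t0.
rewrite /atomf; congr (_ * _).
have -> : (u + t * (2 * pi) * k%:~R) * t^-1 = u * t^-1 + (pi *+ 2) * k%:~R.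
  by field.
case: k => n'.
  by rewrite -[(Posz n')%:~R]/(n'%:R) mulr_natr trig_per.
rewrite NegzE mulrN mulr_natr.
by rewrite -[in RHS](subrK ((pi *+ 2) *+ n'.+1) (u * t^-1)) trig_per.
Qed.

Lemma inv_C a c X : den CE (gact a c X) = den CE X.
Proof.
rewrite /= !gact_cc //= /xv /zv /xiv /etv /brk /ebas /=.
rewrite !big_ord_recr !big_ord0 /= /subn /addn /=.
ring.
Qed.

Lemma inv_H a c X : den HamE (gact a c X) = den HamE X.
Proof.
rewrite /= !gact_cc //= /xv /zv /xiv /etv /brk /ebas /=.
rewrite !big_ord_recr !big_ord0 /= /subn /addn /=.
ring.
Qed.

Lemma inv_F a c X : den FE (gact a c X) = den FE X.
Proof.
rewrite /= !gact_cc //= /xv /zv /xiv /etv /brk /ebas /=.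
rewrite !big_ord_recr !big_ord0 /= /subn /addn /=.
rewrite -[in RHS](atomf_per _ _ _ _ (- a 0%N)).
congr atomf.
by rewrite intrN; field.
Qed.

Lemma inv_G a c X : den GE (gact a c X) = den GE X.
Proof.
rewrite /= !gact_cc //= /xv /zv /xiv /etv /brk /ebas /=.
rewrite !big_ord_recr !big_ord0 /= /subn /addn /=.
rewrite -[in RHS](atomf_per _ _ _ _ (a 1%N)).
by congr atomf; field.
Qed.

Lemma inv_Q a c X : den QE (gact a c X) = den QE X.
Proof.
rewrite /= !gact_cc //= /xv /zv /xiv /etv /brk /ebas /=.
rewrite !big_ord_recr !big_ord0 /= /subn /addn /=.
ring.
Qed.
Lemma perturb (O : set (cT R)) (X v : cT R) (P : R -> Prop) :
  open O -> O X -> (forall e : R, 0 < e -> exists2 h : R, `|h| < e & P h) ->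
  exists h : R, O (h *: v + X) /\ P h.
Proof.
move=> oO OX hP.
have cg : {for (0:R), continuous (fun h : R => h *: v + X)}.
  apply: (@continuousD _ _ _ (fun h : R => h *: v) (cst X)).
    exact: (@continuousZr_tmp _ _ _ id v 0 cvg_id).
  exact: cst_continuous.
have nO : nbhs (0:R) ((fun h : R => h *: v + X) @^-1` O).
  apply: cg; rewrite /= scale0r add0r; apply: open_nbhs_nbhs; split => //.
move/nbhs_ballP: nO => [e e0 he].
have [h hh Ph] := hP e e0.
exists h; split => //; apply: he; rewrite /ball /= sub0r normrN //.
Qed.

Lemma cos_step (th c : R) : c != 0 ->
  forall e : R, 0 < e -> exists2 h : R, `|h| < e & cos (th + c * h) != 0.
Proof.
move=> c0 e e0.
have [cz|cn] := eqVneq (cos th) 0; last by exists 0; rewrite ?normr0 ?mulr0 ?addr0.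
have ca : 0 < `|c| by rewrite normr_gt0.
set d := e * `|c| / (e * `|c| + 1).
have ec : 0 < e * `|c| by rewrite mulr_gt0.
have d0 : 0 < d by rewrite divr_gt0 // ltr_wpDr.
have d1 : d < 1 by rewrite ltr_pdivrMr ?ltr_wpDr // mul1r ltrDl.
exists (d / c).
  rewrite normrM normfV ltr_pdivrMr // /d.
  rewrite ger0_norm ?ltW // ltr_pdivrMr ?ltr_wpDr // ltr_pMr //.
  by rewrite ltrDr.
rewrite mulrC divfK // cosD cz mul0r sub0r oppr_eq0 mulf_neq0 //.
  apply/eqP => s0; have := cos2Dsin2 th; rewrite cz s0 expr0n /= addr0 => /eqP.
  by rewrite eq_sym oner_eq0.
by rewrite gt_eqF // sin2_gt0 // d0 /= (lt_trans d1) // ltr1n.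
Qed.

Lemma quad_step (A B C : R) : A != 0 ->
  forall e : R, 0 < e -> exists2 h : R, `|h| < e & A * h ^+ 2 + B * h + C != 0.
Proof.
move=> A0 e e0.
have [Cz|Cn] := eqVneq C 0; last by exists 0; rewrite ?normr0 ?expr0n /= ?mulr0 ?add0r.
have e2 : `|e / 2| < e by rewrite ger0_norm ?divr_ge0 ?ltW // ltr_pdivrMr // ltr_pMr // ltr1n.
have e4 : `|e / 4| < e by rewrite ger0_norm ?divr_ge0 ?ltW // ltr_pdivrMr // ltr_pMr // ltr1n.
have [z|nz] := eqVneq (A * (e / 2) ^+ 2 + B * (e / 2) + C) 0; last by exists (e / 2).
exists (e / 4) => //; apply/eqP => z4.
move: z z4; rewrite Cz !addr0 => z z4.
have h1 : A * (e / 2) + B = 0.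
  apply: (mulIf (x := e / 2)); first by rewrite gt_eqF // divr_gt0.
  by rewrite mul0r -z; ring.
have h2 : A * (e / 4) + B = 0.
  apply: (mulIf (x := e / 4)); first by rewrite gt_eqF // divr_gt0.
  by rewrite mul0r -z4; ring.
have : A * (e / 4) = 0.
  have -> : A * (e / 4) = (A * (e / 2) + B) - (A * (e / 4) + B) by field.
  by rewrite h1 h2 subr0.
move/eqP; rewrite mulf_eq0 (negbTE A0) /= mulf_eq0 (gt_eqF e0) /= invr_eq0 => /eqP.
by move/eqP; rewrite pnatr_eq0.
Qed.

Fixpoint vfree (p : nat -> bool) (e : expr R) : bool :=
  match e with
  | Zr => true
  | Cst _ => true
  | Var k => (k < 16)%N && ~~ p k
  | Add a b => vfree p a && vfree p b
  | Mul a b => vfree p a && vfree p b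
  | Atom _ _ J => ~~ p 15 && vfree p J
  end.

Lemma den_vfree p e (X Y : cT R) : vfree p e ->
  (forall k, (k < 16)%N -> ~~ p k -> cc Y k = cc X k) -> den e Y = den e X.
Proof.
move=> + hY; elim: e => [|c|k|a IHa b IHb|a IHa b IHb|n b J IH] //=.
- by case/andP => hk hp; rewrite hY.
- by case/andP => ha hb; rewrite IHa ?IHb.
- by case/andP => ha hb; rewrite IHa ?IHb.
- by case/andP => hp hJ; rewrite IH // hY.
Qed.

Definition PhiE := Sub (Mul (Dn 8 HamE) (Dn 9 QE)) (Mul (Dn 9 HamE) (Dn 8 QE)).
Definition FdE := Dn 11 FE.
Definition GdE := Dn 10 GE.
Definition Uset : set (cT R) := [set X | den PhiE X != 0 /\ cc X 15 != 0 /\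
   den FdE X != 0 /\ den GdE X != 0].

Lemma open_ne0 (g : cT R -> R) : continuous g -> open [set X | g X != 0].
Proof.
move=> cg; have -> : [set X | g X != 0] = g @^-1` [set x | x != 0] by [].
by apply: open_comp => // x _; exact: cg.
Qed.

Lemma U_open : open Uset.
Proof.
have -> : Uset = [set X | den PhiE X != 0] `&` ([set X | cc X 15 != 0] `&`
   ([set X | den FdE X != 0] `&` [set X | den GdE X != 0])).
  by apply/seteqP; split => X.
apply: openI; first exact/open_ne0/den_cont.
apply: openI; first exact/open_ne0/ccont.
by apply: openI; exact/open_ne0/den_cont.
Qed.

Lemma FdE_val Y : den FdE Y = 2 * pi * atomf 1 false (den J1E Y) (cc Y 15).
Proof. rewrite /FdE /=; ring. Qed.

Lemma GdE_val Y : den GdE Y = 2 * pi * atomf 1 false (den J0E Y) (cc Y 15).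
Proof. rewrite /GdE /=; ring. Qed.

Lemma atomf1_ne0 (u t : R) : t != 0 -> cos (u * t^-1) != 0 -> atomf 1 false u t != 0.
Proof.
move=> t0 c0; rewrite /atomf /trig /Ef (negbTE t0) expr1.
by rewrite !mulf_neq0 // ?invr_eq0 // gt_eqF // expR_gt0.
Qed.

Lemma PhiE_val Y : den PhiE Y = 2 * ((cc Y 13 ^+ 2 - cc Y 14 ^+ 2) * den P0 Y * den P1 Y
   - cc Y 13 * cc Y 14 * (den P0 Y ^+ 2 - den P1 Y ^+ 2)).
Proof. by rewrite /PhiE /=; field. Qed.

Lemma cc_pert1 m (h : R) X j : (m < 16)%N -> (j < 16)%N ->
  cc (h *: @evec R 16 (inord m) + X) j = h * dvn R m j + cc X j.
Proof. by move=> hm hj; rewrite cc_line cc_evec. Qed.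

Lemma cc_pert2 m m' (lam h : R) X j : (m < 16)%N -> (m' < 16)%N -> (j < 16)%N ->
  cc (h *: (@evec R 16 (inord m) + lam *: @evec R 16 (inord m')) + X) j
   = h * (dvn R m j + lam * dvn R m' j) + cc X j.
Proof.
move=> hm hm' hj; rewrite cc_line; congr (_ * _ + _).
by rewrite -!cc_evec // /cc !mxE.
Qed.

Lemma pi_neq0 : (pi : R) != 0.
Proof. by rewrite gt_eqF // pi_gt0. Qed.

Lemma ex_ne0 (a : R) : forall e : R, 0 < e -> exists2 h : R, `|h| < e & a + h != 0.
Proof.
move=> e e0; have [az|an] := eqVneq a 0; last by exists 0; rewrite ?normr0 ?addr0.
exists (e / 2); last by rewrite az add0r gt_eqF // divr_gt0.
by rewrite ger0_norm ?divr_ge0 ?ltW // ltr_pdivrMr // ltr_pMr // ltr1n.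
Qed.

Lemma U_dense : dense Uset.
Proof.
move=> O [X0 OX0] oO.
have [h1 [HO1 HP1]] := perturb (@evec R 16 (inord 15)) oO OX0 (ex_ne0 (cc X0 15)).
set X1 := h1 *: _ + X0 in HO1.
have t1 : cc X1 15 != 0 by rewrite cc_pert1 // /dvn /= mulr1 addrC.
set t := cc X1 15.
have c2 : 2 * pi * t^-1 != 0 by rewrite !mulf_neq0 ?invr_eq0 ?pi_neq0 // pnatr_eq0.
have [h2 [HO2 HP2]] := perturb (@evec R 16 (inord 11)) oO HO1
   (cos_step (den J1E X1 * t^-1) c2).
set X2 := h2 *: _ + X1 in HO2.
have t2 : cc X2 15 = t by rewrite cc_pert1 // /dvn /= mulr0 add0r.
have f2 : den FdE X2 != 0.
  rewrite FdE_val; apply: mulf_neq0; first by rewrite mulf_neq0 ?pi_neq0 ?pnatr_eq0.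
  rewrite t2; apply: atomf1_ne0 => //.
  have -> : den J1E X2 = den J1E X1 + 2 * pi * h2.
    by rewrite /= !cc_pert1 // /dvn /=; ring.
  by rewrite mulrDl (_ : 2 * pi * h2 / t = 2 * pi * t^-1 * h2) //; ring.
have [h3 [HO3 HP3]] := perturb (@evec R 16 (inord 10)) oO HO2
   (cos_step (den J0E X2 * t^-1) c2).
set X3 := h3 *: _ + X2 in HO3.
have e32 : forall k, (k < 16)%N -> ~~ (k == 10)%N -> cc X3 k = cc X2 k.
  by move=> k hk hk'; rewrite cc_pert1 // /dvn eq_sym (negbTE hk') mulr0 add0r.
have t3 : cc X3 15 = t by rewrite e32.
have f3 : den FdE X3 != 0 by rewrite (@den_vfree (fun k => k == 10)%N _ X2).
have g3 : den GdE X3 != 0.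
  rewrite GdE_val; apply: mulf_neq0; first by rewrite mulf_neq0 ?pi_neq0 ?pnatr_eq0.
  rewrite t3; apply: atomf1_ne0 => //.
  have -> : den J0E X3 = den J0E X2 + 2 * pi * h3.
    by rewrite /= !cc_pert1 // /dvn /=; ring.
  by rewrite mulrDl (_ : 2 * pi * h3 / t = 2 * pi * t^-1 * h3) //; ring.
have [h4 [HO4 HP4]] := perturb (@evec R 16 (inord 13)) oO HO3 (ex_ne0 (cc X3 13)).
set X4 := h4 *: _ + X3 in HO4.
have e43 : forall k, (k < 16)%N -> ~~ (k == 13)%N -> cc X4 k = cc X3 k.
  by move=> k hk hk'; rewrite cc_pert1 // /dvn eq_sym (negbTE hk') mulr0 add0r.
have a4 : cc X4 13 != 0 by rewrite cc_pert1 // /dvn /= mulr1 addrC.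
have t4 : cc X4 15 = t by rewrite e43.
have f4 : den FdE X4 != 0 by rewrite (@den_vfree (fun k => k == 13)%N _ X3).
have g4 : den GdE X4 != 0 by rewrite (@den_vfree (fun k => k == 13)%N _ X3).
set e0 := cc X4 13; set e1 := cc X4 14.
set p0 := den P0 X4; set p1 := den P1 X4.
set lam : R := if e1 == 0 then 1 else 0.
set A := 2 * ((e0 ^+ 2 - e1 ^+ 2) * lam - e0 * e1 * (1 - lam ^+ 2)).
set B := 2 * ((e0 ^+ 2 - e1 ^+ 2) * (p0 * lam + p1) - e0 * e1 * (2 * p0 - 2 * lam * p1)).
set C := den PhiE X4.
have A0 : A != 0.
  have [e1z|e1n] := eqVneq e1 0.
    rewrite /A /lam e1z eqxx expr0n /= subr0 mulr1 mulr0 mul0r subr0.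
    by rewrite mulf_neq0 ?pnatr_eq0 // expf_neq0.
  rewrite /A /lam (negbTE e1n) mulr0 expr0n /= subr0 mulr1 add0r.
  by rewrite mulf_neq0 ?pnatr_eq0 // oppr_eq0 mulf_neq0.
have [h5 [HO5 HP5]] := perturb (@evec R 16 (inord 8) + lam *: @evec R 16 (inord 9))
   oO HO4 (quad_step B C A0).
set X5 := h5 *: _ + X4 in HO5.
have e54 : forall k, (k < 16)%N -> ~~ ((k == 8) || (k == 9))%N -> cc X5 k = cc X4 k.
  move=> k hk; rewrite negb_or => /andP[hk8 hk9].
  by rewrite cc_pert2 // /dvn eq_sym (negbTE hk8) eq_sym (negbTE hk9) mulr0 addr0 mulr0 add0r.
exists X5; split => //.
split; last split; last split.
- rewrite PhiE_val.
  have -> : den P0 X5 = p0 + h5 by rewrite /p0 /= !cc_pert2 // /dvn /=; ring.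
  have -> : den P1 X5 = p1 + lam * h5 by rewrite /p1 /= !cc_pert2 // /dvn /=; ring.
  rewrite !e54 // -/e0 -/e1.
  have <- : A * h5 ^+ 2 + B * h5 + C = 2 * ((e0 ^+ 2 - e1 ^+ 2) * (p0 + h5) * (p1 + lam * h5)
   - e0 * e1 * ((p0 + h5) ^+ 2 - (p1 + lam * h5) ^+ 2)).
    by rewrite /C PhiE_val -/e0 -/e1 -/p0 -/p1 /A /B; ring.
  exact: HP5.
- by rewrite e54 // t4.
- by rewrite (@den_vfree (fun k => (k == 8) || (k == 9))%N _ X4).
- by rewrite (@den_vfree (fun k => (k == 8) || (k == 9))%N _ X4).
Qed.

Definition fE (k : nat) : expr R := match k with 0 => Var R 13 | 1 => Var R 14 | 2 => Var R 15 | 3 => CE | 4 => HamE | 5 => QE | 6 => FE | _ => GE end.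

Lemma vok_fE k : vok (fE k).
Proof. by do 7 (case: k => [|k] //). Qed.

Lemma pdiff_Dn m (e : expr R) (X : cT R) : (m < 16)%N -> vok e -> pdiff (inord m) (den e) X = den (Dn m e) X.
Proof. by move=> hm he; rewrite pdiff_dvn // Dn_D. Qed.

Lemma lin2 (a b p q p' q' : R) : a * p + b * q = 0 -> a * p' + b * q' = 0 ->
  p * q' + -1 * (p' * q) != 0 -> a = 0 /\ b = 0.
Proof.
move=> h1 h2 hd.
have ea : a * (p * q' + -1 * (p' * q)) = 0.
  have -> : a * (p * q' + -1 * (p' * q)) = q' * (a * p + b * q) - q * (a * p' + b * q') by ring.
  by rewrite h1 h2 !mulr0 subr0.
have eb : b * (p * q' + -1 * (p' * q)) = 0.
  have -> : b * (p * q' + -1 * (p' * q)) = p * (a * p' + b * q') - p' * (a * p + b * q) by ring.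
  by rewrite h1 h2 !mulr0 subr0.
move/eqP: ea; rewrite mulf_eq0 (negbTE hd) orbF => /eqP ->.
by move/eqP: eb; rewrite mulf_eq0 (negbTE hd) orbF => /eqP ->.
Qed.

Lemma rank_U X : Uset X -> row_free (Defs.jacobian (fun k : 'I_8 => den (fE k)) X).
Proof.
case=> [hPhi [ht [hF hG]]].
apply: inj_row_free => v hv.
set w := fun k : nat => v ord0 (inord k).
have col : forall j, (j < 16)%N -> \sum_(k < 8) w k * den (Dn j (fE k)) X = 0.
  move=> j hj; have := congr1 (fun M : 'M[R]_(1,16) => M ord0 (inord j)) hv.
  rewrite !mxE => h; rewrite -[RHS]h; apply: eq_bigr => k _.
  by rewrite mxE /w inord_val pdiff_Dn // vok_fE.
have c8 := col 8%N isT. have c9 := col 9%N isT. have c10 := col 10%N isT.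
have c11 := col 11%N isT. have c12 := col 12%N isT. have c13 := col 13%N isT.
have c14 := col 14%N isT. have c15 := col 15%N isT.
with_strategy opaque [HamE QE FE GE] (rewrite !big_ord_recr !big_ord0 /= in c8 c9 c10 c11 c12 c13 c14 c15).
have F8 : den (Dn 8 FE) X = 0 by [].
have F9 : den (Dn 9 FE) X = 0 by [].
have F10 : den (Dn 10 FE) X = 0 by [].
have F12 : den (Dn 12 FE) X = 0 by [].
have F13 : den (Dn 13 FE) X = 0 by [].
have F14 : den (Dn 14 FE) X = 0 by [].
have G8 : den (Dn 8 GE) X = 0 by [].
have G9 : den (Dn 9 GE) X = 0 by [].
have G11 : den (Dn 11 GE) X = 0 by [].
have G12 : den (Dn 12 GE) X = 0 by [].
have G13 : den (Dn 13 GE) X = 0 by [].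
have G14 : den (Dn 14 GE) X = 0 by [].
rewrite ?F8 ?G8 ?mulr0 ?add0r ?addr0 in c8.
rewrite ?F9 ?G9 ?mulr0 ?add0r ?addr0 in c9.
with_strategy opaque [HamE QE] (rewrite /PhiE /= in hPhi).
have [w4z w5z] := lin2 c8 c9 hPhi.
rewrite w4z w5z ?F12 ?G12 ?mul0r ?mulr0 ?add0r ?addr0 in c12.
have w3z : w 3%N = 0.
  by move/eqP: c12; rewrite mulr1 mulf_eq0 (negbTE ht) orbF => /eqP.
rewrite w3z w4z w5z ?G11 ?mul0r ?mulr0 ?add0r ?addr0 in c11.
have w6z : w 6%N = 0.
  by move/eqP: c11; rewrite mulf_eq0 -/(den FdE X) (negbTE hF) orbF => /eqP.
rewrite w3z w4z w5z ?F10 ?mul0r ?mulr0 ?add0r ?addr0 in c10.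
have w7z : w 7%N = 0.
  by move/eqP: c10; rewrite mulf_eq0 -/(den GdE X) (negbTE hG) orbF => /eqP.
rewrite w3z w4z w5z ?F13 ?G13 ?mul0r ?mulr0 ?add0r ?addr0 ?mulr1 in c13.
rewrite w3z w4z w5z ?F14 ?G14 ?mul0r ?mulr0 ?add0r ?addr0 ?mulr1 in c14.
rewrite w3z w4z w5z w6z w7z ?mul0r ?mulr0 ?add0r ?addr0 ?mulr1 in c15.
apply/rowP => k; rewrite mxE -(inord_val k) -/(w k).
case: k => k hk /=.
do 8 (case: k hk => [_|k hk]; first done).
by [].
Qed.

Lemma pb_0_1 X : poisson (den (fE 0)) (den (fE 1)) X = 0.
Proof.
rewrite poisson_Dn //.
rewrite !big_ord_recr big_ord0 /=.
ring.
Qed.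
Lemma pb_0_2 X : poisson (den (fE 0)) (den (fE 2)) X = 0.
Proof.
rewrite poisson_Dn //.
rewrite !big_ord_recr big_ord0 /=.
ring.
Qed.
Lemma pb_0_3 X : poisson (den (fE 0)) (den (fE 3)) X = 0.
Proof.
rewrite poisson_Dn //.
rewrite !big_ord_recr big_ord0 /=.
ring.
Qed.
Lemma pb_0_4 X : poisson (den (fE 0)) (den (fE 4)) X = 0.
Proof.
rewrite poisson_Dn //.
rewrite !big_ord_recr big_ord0 /=.
ring.
Qed.
Lemma pb_0_5 X : poisson (den (fE 0)) (den (fE 5)) X = 0.
Proof.
rewrite poisson_Dn //.
rewrite !big_ord_recr big_ord0 /=.
ring.
Qed.
Lemma pb_0_6 X : poisson (den (fE 0)) (den (fE 6)) X = 0.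
Proof.
rewrite poisson_Dn //.
rewrite !big_ord_recr big_ord0 /=.
ring.
Qed.
Lemma pb_0_7 X : poisson (den (fE 0)) (den (fE 7)) X = 0.
Proof.
rewrite poisson_Dn //.
rewrite !big_ord_recr big_ord0 /=.
ring.
Qed.
Lemma pb_1_2 X : poisson (den (fE 1)) (den (fE 2)) X = 0.
Proof.
rewrite poisson_Dn //.
rewrite !big_ord_recr big_ord0 /=.
ring.
Qed.
Lemma pb_1_3 X : poisson (den (fE 1)) (den (fE 3)) X = 0.
Proof.
rewrite poisson_Dn //.
rewrite !big_ord_recr big_ord0 /=.
ring.
Qed.
Lemma pb_1_4 X : poisson (den (fE 1)) (den (fE 4)) X = 0.
Proof.
rewrite poisson_Dn //.
rewrite !big_ord_recr big_ord0 /=.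
ring.
Qed.
Lemma pb_1_5 X : poisson (den (fE 1)) (den (fE 5)) X = 0.
Proof.
rewrite poisson_Dn //.
rewrite !big_ord_recr big_ord0 /=.
ring.
Qed.
Lemma pb_1_6 X : poisson (den (fE 1)) (den (fE 6)) X = 0.
Proof.
rewrite poisson_Dn //.
rewrite !big_ord_recr big_ord0 /=.
ring.
Qed.
Lemma pb_1_7 X : poisson (den (fE 1)) (den (fE 7)) X = 0.
Proof.
rewrite poisson_Dn //.
rewrite !big_ord_recr big_ord0 /=.
ring.
Qed.
Lemma pb_2_3 X : poisson (den (fE 2)) (den (fE 3)) X = 0.
Proof.
rewrite poisson_Dn //.
rewrite !big_ord_recr big_ord0 /=.
ring.
Qed.
Lemma pb_2_4 X : poisson (den (fE 2)) (den (fE 4)) X = 0.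
Proof.
rewrite poisson_Dn //.
rewrite !big_ord_recr big_ord0 /=.
ring.
Qed.
Lemma pb_2_5 X : poisson (den (fE 2)) (den (fE 5)) X = 0.
Proof.
rewrite poisson_Dn //.
rewrite !big_ord_recr big_ord0 /=.
ring.
Qed.
Lemma pb_2_6 X : poisson (den (fE 2)) (den (fE 6)) X = 0.
Proof.
rewrite poisson_Dn //.
rewrite !big_ord_recr big_ord0 /=.
ring.
Qed.
Lemma pb_2_7 X : poisson (den (fE 2)) (den (fE 7)) X = 0.
Proof.
rewrite poisson_Dn //.
rewrite !big_ord_recr big_ord0 /=.
ring.
Qed.
Lemma pb_3_4 X : poisson (den (fE 3)) (den (fE 4)) X = 0.
Proof.
rewrite poisson_Dn //.
rewrite !big_ord_recr big_ord0 /=.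
ring.
Qed.
Lemma pb_3_5 X : poisson (den (fE 3)) (den (fE 5)) X = 0.
Proof.
rewrite poisson_Dn //.
rewrite !big_ord_recr big_ord0 /=.
ring.
Qed.
Lemma pb_3_6 X : poisson (den (fE 3)) (den (fE 6)) X = 0.
Proof.
rewrite poisson_Dn //.
rewrite !big_ord_recr big_ord0 /=.
ring.
Qed.
Lemma pb_3_7 X : poisson (den (fE 3)) (den (fE 7)) X = 0.
Proof.
rewrite poisson_Dn //.
rewrite !big_ord_recr big_ord0 /=.
ring.
Qed.
Lemma pb_4_5 X : poisson (den (fE 4)) (den (fE 5)) X = 0.
Proof.
rewrite poisson_Dn //.
rewrite !big_ord_recr big_ord0 /=.
ring.
Qed.
Lemma pb_4_6 X : poisson (den (fE 4)) (den (fE 6)) X = 0.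
Proof.
rewrite poisson_Dn //.
rewrite !big_ord_recr big_ord0 /=.
ring.
Qed.
Lemma pb_4_7 X : poisson (den (fE 4)) (den (fE 7)) X = 0.
Proof.
rewrite poisson_Dn //.
rewrite !big_ord_recr big_ord0 /=.
ring.
Qed.
Lemma pb_5_6 X : poisson (den (fE 5)) (den (fE 6)) X = 0.
Proof.
rewrite poisson_Dn //.
rewrite !big_ord_recr big_ord0 /=.
ring.
Qed.
Lemma pb_5_7 X : poisson (den (fE 5)) (den (fE 7)) X = 0.
Proof.
rewrite poisson_Dn //.
rewrite !big_ord_recr big_ord0 /=.
ring.
Qed.
Lemma pb_6_7 X : poisson (den (fE 6)) (den (fE 7)) X = 0.
Proof.
rewrite poisson_Dn //.
rewrite !big_ord_recr big_ord0 /=.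
ring.
Qed.

Lemma Ham_den : Ham (R:=R) = den HamE.
Proof.
apply: funext => X.
rewrite /Ham /brk /ebas /xiv /etv /xv /=.
rewrite !big_ord_recr !big_ord0 /= /subn /addn /=.
ring.
Qed.

Lemma pself (f : cT R -> R) X : poisson f f X = 0.
Proof. by rewrite /poisson; apply: big1 => i _; rewrite [X in X - _]mulrC subrr. Qed.

Lemma panti (f g : cT R -> R) X : poisson f g X = - poisson g f X.
Proof. by rewrite /poisson -sumrN; apply: eq_bigr => i _; ring. Qed.

Lemma pb_lt k l X : (k < l)%N -> (l < 8)%N -> poisson (den (fE k)) (den (fE l)) X = 0.
Proof.
case: k => [|[|[|[|[|[|[|k]]]]]]]; case: l => [|[|[|[|[|[|[|[|l]]]]]]]] //= _ _.
all: first [ exact: (pb_0_1 X) | exact: (pb_0_2 X) | exact: (pb_0_3 X) | exact: (pb_0_4 X) | exact: (pb_0_5 X) | exact: (pb_0_6 X) | exact: (pb_0_7 X) | exact: (pb_1_2 X) | exact: (pb_1_3 X) | exact: (pb_1_4 X) | exact: (pb_1_5 X) | exact: (pb_1_6 X) | exact: (pb_1_7 X) | exact: (pb_2_3 X) | exact: (pb_2_4 X) | exact: (pb_2_5 X) | exact: (pb_2_6 X) | exact: (pb_2_7 X) | exact: (pb_3_4 X) | exact: (pb_3_5 X) | exact: (pb_3_6 X) | exact: (pb_3_7 X) | exact: (pb_4_5 X) | exact: (pb_4_6 X) | exact: (pb_4_7 X) | exact: (pb_5_6 X) | exact: (pb_5_7 X) | exact: (pb_6_7 X) ].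
Qed.

Lemma pb_all k l X : (k < 8)%N -> (l < 8)%N -> poisson (den (fE k)) (den (fE l)) X = 0.
Proof.
move=> hk hl; case: (ltngtP k l) => [hkl|hkl|->]; first exact: pb_lt.
  by rewrite panti pb_lt // oppr0.
exact: pself.
Qed.

Lemma inv_all k : gamma_invariant (den (fE k)).
Proof.
move=> a c X.
case: k => [|[|[|[|[|[|[|k]]]]]]].
- by rewrite /= gact_cc //= /etv /subn /addn /=.
- by rewrite /= gact_cc //= /etv /subn /addn /=.
- by rewrite /= gact_cc //= /etv /subn /addn /=.
- exact: inv_C.
- exact: inv_H.
- exact: inv_Q.
- exact: inv_F.
- exact: inv_G.
Qed.

End S.

Theorem corollary3p3 (R : realType) : completely_integrable_geodesic_flow R.
Proof.
exists (fun k : 'I_8 => den (fE R k)).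
split; first by move=> k; exact: smooth_den.
split; first by move=> k; exact: inv_all.
split.
  move=> k X; rewrite Ham_den (_ : den (@HamE R) = den (fE R 4)) //.
  exact: pb_all.
split; first by move=> k l X; exact: pb_all.
exists (@Uset R); split; first exact: U_open.
split; first exact: U_dense.
exact: rank_U.
Qed.
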